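(* Fix $c>0$, $0\le\alpha\le1$, $t=\lfloor cn^\alpha\rfloor$ with $1\le t\le\frac{n+1}{2}$. With $s=n-4t+2$, $\Delta_n=(n+1)^2+4s$, $\rho_n=\frac{-(s+1)+\sqrt{\Delta_n}}{4t}$, $c_n=2t\rho_n^2+n+1-2t$, $\lambda_m=\frac{n-3+\sqrt{\Delta_n}}{2n}$, $\theta_m=\arccos\lambda_m$, define $\beta_+\in\mathbb{C}^{\mathcal{A}}$ by $$\beta_+(a)=\frac{1}{\sqrt{nc_n}\sin\theta_m}\times\begin{cases}-\rho_n(1+\cos\theta_m),&a\in\mathcal{A}_1,\\ \rho_n(1+\cos\theta_m),&a\in\mathcal{A}_2,\\ \rho_n(1-\cos\theta_m),&a\in\mathcal{A}_3,\\ \rho_n-\cos\theta_m,&a\in\mathcal{A}_4,\\ 1-\rho_n\cos\theta_m,&a\in\mathcal{A}_5,\\ 1-\cos\theta_m,&a\in\mathcal{A}_6.\end{cases}$$ Then the finding probability of $\beta_+$ on the marked edges, $$FP_n=\sum_{a\in\mathcal{M}}\big(|\beta_+(a)|^2+|\beta_+(a^{-1})|^2\big)=\frac{2t\rho_n^2(1+\cos\theta_m)^2}{nc_n\sin^2\theta_m},$$ satisfies $FP_n=1-o(1)$ as $n\to\infty$.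
   Context: Setting. $K_{n+1}$ is the complete graph on the vertex set $V$ with $|V|=n+1$, edge set $E$. The arc set is $\mathcal{A}=\{(x,y): x\ne y\}$; for $a=(x,y)$, $o(a)=x$, $t(a)=y$, $a^{-1}=(y,x)$. A map $\sigma:\mathcal{A}\to\{\pm1\}$ satisfies: $\sigma(a)=-1$ implies $\sigma(a^{-1})=1$. $\mathcal{M}=\{a:\sigma(a)=-1\}$, $\mathcal{M}^{-1}=\{a^{-1}:a\in\mathcal{M}\}$, $\tau(xy)=\sigma((x,y))\sigma((y,x))$, $M=\{e\in E:\tau(e)=-1\}$ (marked edges), assumed to be a $t$-matching (set of $t$ pairwise vertex-disjoint edges), and $\partial M$ is the set of endpoints of edges of $M$. Partition: $\mathcal{A}_1=\mathcal{M}$; $\mathcal{A}_2=\mathcal{M}^{-1}$; $\mathcal{A}_3=\{a\notin\mathcal{M}\cup\mathcal{M}^{-1}: t(a),o(a)\in\partial M\}$; $\mathcal{A}_4=\{a: t(a)\in\partial M,\ o(a)\notin\partial M\}$; $\mathcal{A}_5=\{a: t(a)\notin\partial M,\ o(a)\in\partial M\}$; $\mathcal{A}_6=\{a:t(a),o(a)\notin\partial M\}$. *)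

(* Defs.v *)
From Stdlib Require Import Reals.
From HB Require Import structures.
From mathcomp Require Import all_boot all_order all_algebra.
From mathcomp Require Import Rstruct.

Set Implicit Arguments.
Unset Strict Implicit.
Unset Printing Implicit Defensive.

(* Vertices: a finType V with #|V| = n+1.  Arcs: pairs (x,y) with x <> y.
   sigma : V -> V -> int, only relevant on arcs, with values in {1,-1}. *)

Definition is_arc (V : finType) (a : V * V) : bool := a.1 != a.2.

Definition arc_inv (V : finType) (a : V * V) : V * V := (a.2, a.1).

Definition sigma_valid (V : finType) (sigma : V -> V -> int) : Prop :=
  (forall x y : V, x != y -> sigma x y = 1%R \/ sigma x y = (-1)%R) /\
  (forall x y : V, x != y -> sigma x y = (-1)%R -> sigma y x = 1%R).

Definition Mcal (V : finType) (sigma : V -> V -> int) : {set V * V} :=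
  [set a : V * V | is_arc a && (sigma a.1 a.2 == (-1)%R)].

Definition tau (V : finType) (sigma : V -> V -> int) (x y : V) : int :=
  (sigma x y * sigma y x)%R.

Definition Medges (V : finType) (sigma : V -> V -> int) : {set {set V}} :=
  [set e : {set V} | [exists x : V, exists y : V,
      [&& x != y, e == [set x; y] & tau sigma x y == (-1)%R]]].

Definition is_t_matching (V : finType) (M : {set {set V}}) (t : nat) : Prop :=
  #|M| = t /\
  (forall e1 e2, e1 \in M -> e2 \in M -> e1 != e2 -> [disjoint e1 & e2]).

Definition dM (V : finType) (sigma : V -> V -> int) : {set V} :=
  \bigcup_(e in Medges sigma) e.

Definition A1 (V : finType) (sigma : V -> V -> int) : {set V * V} := Mcal sigma.
Definition A2 (V : finType) (sigma : V -> V -> int) : {set V * V} :=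
  [set a : V * V | arc_inv a \in Mcal sigma].
Definition A3 (V : finType) (sigma : V -> V -> int) : {set V * V} :=
  [set a : V * V | [&& is_arc a, a \notin A1 sigma, a \notin A2 sigma,
                      a.2 \in dM sigma & a.1 \in dM sigma]].
Definition A4 (V : finType) (sigma : V -> V -> int) : {set V * V} :=
  [set a : V * V | [&& is_arc a, a.2 \in dM sigma & a.1 \notin dM sigma]].
Definition A5 (V : finType) (sigma : V -> V -> int) : {set V * V} :=
  [set a : V * V | [&& is_arc a, a.2 \notin dM sigma & a.1 \in dM sigma]].
Definition A6 (V : finType) (sigma : V -> V -> int) : {set V * V} :=
  [set a : V * V | [&& is_arc a, a.2 \notin dM sigma & a.1 \notin dM sigma]].

Local Open Scope R_scope.

(* t = floor(c n^alpha); Int_part x = up x - 1 is the floor of x *)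
Definition tfun (c alpha : R) (n : nat) : nat :=
  Z.to_nat (Int_part (c * Rpower (INR n) alpha)).

Definition s_ (n t : nat) : R := INR n - 4 * INR t + 2.
Definition Delta (n t : nat) : R := (INR n + 1) ^ 2 + 4 * s_ n t.
Definition rho (n t : nat) : R := (- (s_ n t + 1) + sqrt (Delta n t)) / (4 * INR t).
Definition cn (n t : nat) : R := 2 * INR t * (rho n t) ^ 2 + INR n + 1 - 2 * INR t.
Definition lambda_m (n t : nat) : R := (INR n - 3 + sqrt (Delta n t)) / (2 * INR n).
Definition theta_m (n t : nat) : R := acos (lambda_m n t).

(* beta_+ (real-valued entries of the vector in C^A) *)
Definition beta_plus (n t : nat) (V : finType) (sigma : V -> V -> int) (a : V * V) : R :=
  let r := rho n t in
  let th := theta_m n t in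
  / (sqrt (INR n * cn n t) * sin th) *
  (if a \in A1 sigma then - r * (1 + cos th)
   else if a \in A2 sigma then r * (1 + cos th)
   else if a \in A3 sigma then r * (1 - cos th)
   else if a \in A4 sigma then r - cos th
   else if a \in A5 sigma then 1 - r * cos th
   else if a \in A6 sigma then 1 - cos th
   else 0).

Definition FP (c alpha : R) (n : nat) : R :=
  let t := tfun c alpha n in
  2 * INR t * (rho n t) ^ 2 * (1 + cos (theta_m n t)) ^ 2
  / (INR n * cn n t * (sin (theta_m n t)) ^ 2).

(* Main.v *)
Require Import Defs.
From Stdlib Require Import Reals Lra Psatz.
From HB Require Import structures.
From mathcomp Require Import all_boot all_order all_algebra.
From mathcomp Require Import Rstruct.
Set Implicit Arguments.
Unset Strict Implicit.
Lemma set2_eq (V : finType) (x y u v : V) : x != y -> [set x; y] = [set u; v] ->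
  (x = u /\ y = v) \/ (x = v /\ y = u).
Proof.
move=> Hxy E.
have hx : x \in [set u; v] by rewrite -E set21.
have hy : y \in [set u; v] by rewrite -E set22.
rewrite !inE in hx hy.
case/orP: hx => /eqP hx; case/orP: hy => /eqP hy; subst; auto;
  by rewrite eqxx in Hxy.
Qed.

Lemma notinv (V : finType) (sigma : V -> V -> int) (a : V * V) :
  sigma_valid sigma -> a \in Mcal sigma -> arc_inv a \notin Mcal sigma.
Proof.
case: a => x y [_ Hv]; rewrite !inE /is_arc /arc_inv /= => /andP[Hxy /eqP Hs].
apply/negP => /andP[_ /eqP Hs'].
have := Hv x y Hxy Hs. by rewrite Hs'.
Qed.

Lemma card_Mcal (V : finType) (sigma : V -> V -> int) :
  sigma_valid sigma -> #|Mcal sigma| = #|Medges sigma|.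
Proof.
move=> Hv.
have Hinj : {in Mcal sigma &, injective (fun a : V * V => [set a.1; a.2])}.
  case=> x y [u v]; rewrite !inE /is_arc /= => /andP[Hxy /eqP Hs] /andP[Huv /eqP Hs'] E.
  case: (set2_eq Hxy E) => [[-> ->] //|[ex ey]]; subst.
  have := (proj2 Hv) _ _ Hxy Hs. by rewrite Hs'.
have Him : Medges sigma = [set [set a.1; a.2] | a in Mcal sigma].
  apply/setP => e; apply/idP/idP.
  - rewrite inE => /existsP[x /existsP[y /and3P[Hxy /eqP -> /eqP Ht]]].
    move: Ht; rewrite /tau.
    have Hyx : y != x by rewrite eq_sym.
    case: ((proj1 Hv) _ _ Hxy) => Hs1; case: ((proj1 Hv) _ _ Hyx) => Hs2;
      rewrite Hs1 Hs2 => Ht.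
    + by move/eqP: Ht.
    + apply/imsetP; exists (y, x); first by rewrite inE /is_arc /= Hyx Hs2 /=.
      by rewrite /= setUC.
    + apply/imsetP; exists (x, y); first by rewrite inE /is_arc /= Hxy Hs1 /=.
      by [].
    + have := (proj2 Hv) _ _ Hxy Hs1. by rewrite Hs2.
  - case/imsetP => [[x y]]; rewrite inE /is_arc /= => /andP[Hxy /eqP Hs] ->.
    rewrite inE; apply/existsP; exists x; apply/existsP; exists y.
    rewrite Hxy eqxx /tau Hs ((proj2 Hv) _ _ Hxy Hs) /=. by [].
by rewrite Him card_in_imset.
Qed.

Import GRing.Theory.
Section An. Local Open Scope R_scope.
Lemma pos_div a b : 0 < a -> 0 <= a * b -> 0 <= b.
Proof. move=> Ha Hab; nra. Qed.

Lemma FP_bound (n t : nat) : (1 <= t)%N -> (2 * t <= n + 1)%N -> (12 <= n)%N ->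
  let F := 2 * INR t * rho n t ^ 2 * (1 + cos (theta_m n t)) ^ 2
           / (INR n * cn n t * (sin (theta_m n t)) ^ 2) in
  1 - 12 / INR n <= F <= 1 + 12 / INR n.
Proof.
move=> /leP Ht /leP H2 /leP Hn F.
have HT : 1 <= INR t by apply: (le_INR 1).
have H2' : 2 * INR t <= INR n + 1.
  have := le_INR _ _ H2; rewrite mult_INR plus_INR /=; lra.
have HN : 12 <= INR n by have := le_INR _ _ Hn; rewrite /= ; lra.
set N := INR n in HN H2' *. set T := INR t in HT H2' *.
have HD : Defs.Delta n t = (N + 3) ^ 2 - 16 * T.
  rewrite /Defs.Delta /s_ -/N -/T; ring.
set x := sqrt (Defs.Delta n t).
have Dpos : 0 <= Defs.Delta n t by rewrite HD; nra.
have hx2 : x * x = (N + 3) ^ 2 - 16 * T by rewrite /x sqrt_sqrt // HD.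
have hx0 : 0 <= x by apply: sqrt_pos.
have hxl : N - 1 <= x by nra.
have hxu : x < N + 3 by nra.
set K := N + 3 + x.
set L := lambda_m n t.
have HL : L * (2 * N) = N - 3 + x by rewrite /L /lambda_m -/x -/N; field; lra.
have HL1 : 0 < L by nra.
have HL2 : L < 1 by nra.
have Hcos : cos (theta_m n t) = L.
  rewrite /theta_m -/L cos_acos //; split; lra.
have Hsin : sin (theta_m n t) ^ 2 = 1 - L * L.
  rewrite /theta_m -/L sin_acos; last (split; lra).
  rewrite /= Rmult_1_r sqrt_sqrt /Rsqr //; nra.
set r := rho n t.
have Hr4 : r * (4 * T) = x - N - 3 + 4 * T by rewrite /r /rho /s_ -/x -/N -/T; field; lra.
have HrK : r * K = K - 4.
  have E : 4 * T * (r * K - (K - 4)) =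
     (r * (4 * T) - (x - N - 3 + 4 * T)) * K + (x * x - ((N + 3) ^ 2 - 16 * T))
    by rewrite /K; ring.
  rewrite Hr4 hx2 !Rminus_diag Rmult_0_l Rplus_0_l in E.
  case: (Rmult_integral _ _ E) => [|]; lra.
have Hr0 : 0 <= r by nra.
have Hr1 : r <= 1 by nra.
set C := cn n t.
have HC : C = 2 * T * r ^ 2 + N + 1 - 2 * T by rewrite /C /cn -/r -/N -/T.
have HCu : C <= N + 1 by nra.
have HCl : N - 3 <= C.
  have E : 2 * T * (1 - r * r) * K = 8 * T * (1 + r).
    have E2 : 2 * T * (1 - r * r) * K - 8 * T * (1 + r) = - 2 * T * (1 + r) * (r * K - (K - 4)) by ring.
    rewrite HrK Rminus_diag Rmult_0_r in E2; lra.
  have : 2 * T * (1 - r * r) * K <= 4 * K by nra.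
  move=> E3. have : 2 * T * (1 - r * r) <= 4 by nra.
  rewrite HC; nra.
pose G := r ^ 2 * (1 + L) * K / (4 * C).
have HFG : F = G.
  have Hb : N * C * (1 - L * L) <> 0.
    apply: Rmult_integral_contrapositive; split; [apply: Rmult_integral_contrapositive; split|]; nra.
  have Hd : 4 * C <> 0 by lra.
  rewrite /F /G Hcos Hsin -/r -/C.
  have E : 2 * T * r ^ 2 * (1 + L) ^ 2 / (N * C * (1 - L * L)) - r ^ 2 * (1 + L) * K / (4 * C)
     = - (r ^ 2 * (1 + L) ^ 2 * C * (K * ((1 - L) * (2 * N) - (N + 3 - x)) / 2
          + ((N + 3 - x) * K - 16 * T) / 2)) / (N * C * (1 - L * L) * (4 * C)).
    field; split; [lra|]; split; [|lra]; nra.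
  have E1 : (1 - L) * (2 * N) - (N + 3 - x) = 0 by nra.
  have E2 : (N + 3 - x) * K - 16 * T = 0 by rewrite /K; nra.
  rewrite E1 E2 in E. apply: Rminus_diag_uniq. rewrite E. field; split; [lra|split; [nra|lra]].
rewrite HFG /G.
pose d := / N.
have Hd : N * d = 1 by rewrite /d; field; lra.
have Hd0 : 0 < d by rewrite /d; apply: Rinv_0_lt_compat; lra.
have Hd1 : d <= / 12 by rewrite /d; apply: Rinv_le_contravar; lra.
have E12 : 12 / N = 12 * d by rewrite /d.
rewrite E12.
have HrL : 1 - 2 * d <= r.
  have E : N * K * (r - 1 + 2 * d) = N * (r * K - K) + 2 * K * (N * d) by ring.
  rewrite HrK Hd in E.
  have HKp : 0 < N * K by rewrite /K; nra.
  have HK2 : 2 * N + 2 <= K by rewrite /K; lra.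
  have : 0 <= N * K * (r - 1 + 2 * d) by rewrite E; lra.
  move/(@pos_div _ _ HKp); lra.
have HLL : 2 - 2 * d <= 1 + L by nra.
have HKl : 2 * N <= K by rewrite /K; lra.
have HKu : K <= 2 * N * (1 + 3 * d) by rewrite /K; nra.
have HCu' : C <= N * (1 + d) by nra.
have HCl' : N * (1 - 3 * d) <= C by nra.
have HC0 : 0 < C by nra.
have P1 : (1 - 2 * d) ^ 2 * (2 - 2 * d) <= r ^ 2 * (1 + L).
  apply: Rmult_le_compat; try nra.
have P2 : r ^ 2 * (1 + L) <= 2 by nra.
split.
- apply: (Rmult_le_reg_r (4 * C)); first lra.
  rewrite /Rdiv Rmult_assoc Rinv_l ?Rmult_1_r; last lra.
  have : (1 - 2 * d) ^ 2 * (2 - 2 * d) * (2 * N) <= r ^ 2 * (1 + L) * K.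
    apply: Rmult_le_compat; nra.
  have : (1 - 12 * d) * (4 * C) <= (1 - 12 * d) * (4 * (N * (1 + d))) by nra.
  have : (1 + d) * (1 - 12 * d) <= (1 - 2 * d) ^ 2 * (1 - d) by nra.
  nra.
- apply: (Rmult_le_reg_r (4 * C)); first lra.
  rewrite /Rdiv Rmult_assoc Rinv_l ?Rmult_1_r; last lra.
  have : r ^ 2 * (1 + L) * K <= 2 * (2 * N * (1 + 3 * d)).
    apply: Rmult_le_compat; nra.
  have : (1 + 12 * d) * (4 * (N * (1 - 3 * d))) <= (1 + 12 * d) * (4 * C) by nra.
  have : (1 + 3 * d) <= (1 - 3 * d) * (1 + 12 * d) by nra.
  nra.
Qed.

Lemma FP_bound' (c alpha : R) (n : nat) : (1 <= tfun c alpha n)%N ->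
  (2 * tfun c alpha n <= n + 1)%N -> (12 <= n)%N ->
  1 - 12 / INR n <= FP c alpha n <= 1 + 12 / INR n.
Proof. move=> h1 h2 h3; exact: (FP_bound h1 h2 h3). Qed.

Lemma sum_term (n t : nat) (V : finType) (sigma : V -> V -> int) :
  (2 * t <= n + 1)%N -> sigma_valid sigma -> #|Mcal sigma| = t ->
  (\sum_(a in Mcal sigma)
         Rplus (Rsqr (Rabs (beta_plus n t sigma a)))
               (Rsqr (Rabs (beta_plus n t sigma (arc_inv a)))))%R
  = 2 * INR t * rho n t ^ 2 * (1 + cos (theta_m n t)) ^ 2
    / (INR n * cn n t * (sin (theta_m n t)) ^ 2).
Proof.
move=> /leP H2 Hv Hc.
set B := / (sqrt (INR n * cn n t) * sin (theta_m n t)).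
set r := rho n t. set co := cos (theta_m n t).
set k := Rsqr (B * (- r * (1 + co))) + Rsqr (B * (r * (1 + co))).
rewrite (eq_bigr (fun _ => k)); last first.
  move=> a Ha.
  have Hn := notinv Hv Ha.
  have Hii : arc_inv (arc_inv a) = a by move: (a) => [].

  rewrite -!Rsqr_abs /beta_plus /A1 /A2 Ha (negbTE Hn) inE Hii Ha.
  by [].
rewrite sumr_const Hc -mulr_natl -INRE.
have H2' : 2 * INR t <= INR n + 1.
  have := le_INR _ _ H2; rewrite mult_INR plus_INR /=; lra.
have Hcn : 0 <= cn n t.
  rewrite /cn -/r.
  have : 0 <= INR t by apply: pos_INR.
  nra.
have Hnc : 0 <= INR n * cn n t by apply: Rmult_le_pos => //; apply: pos_INR.
have HBB : B * B = / (INR n * cn n t * sin (theta_m n t) ^ 2).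
  rewrite /B -Rinv_mult; congr Rinv.
  have := sqrt_sqrt _ Hnc. move=> E. rewrite /=. 
  transitivity (sqrt (INR n * cn n t) * sqrt (INR n * cn n t) *
     (sin (theta_m n t) * sin (theta_m n t))); first ring.
  rewrite E; ring.
have E : INR t * k = 2 * INR t * r ^ 2 * (1 + co) ^ 2 * (B * B)
  by rewrite /k /Rsqr; ring.
rewrite -RmultE E HBB /Rdiv. by [].
Qed.

Lemma FP_cv (c alpha : R) (N0 : nat) : (forall n : nat, (N0 <= n)%N ->
      (1 <= tfun c alpha n)%N /\ (2 * tfun c alpha n <= n + 1)%N) ->
  Un_cv (FP c alpha) 1.
Proof.
move=> HN0.
move=> eps Heps.
have Heps' : (0 < eps / 12) by lra.
have [M [HM HM0]] := archimed_cor1 (eps / 12) Heps'.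
exists (maxn (maxn N0 12) M) => n Hn0.
have Hn : (maxn (maxn N0 12) M <= n)%N by apply/leP.
have hN0 : (N0 <= n)%N by apply: leq_trans Hn; rewrite !leq_max leqnn.
have h12 : (12 <= n)%N by apply: leq_trans Hn; rewrite !leq_max leqnn orbT.
have hM : (M <= n)%N by apply: leq_trans Hn; rewrite !leq_max leqnn orbT.
have [h1 h2] := HN0 n hN0.
have [b1 b2] := FP_bound' h1 h2 h12.
have HMpos : (0 < INR M) by apply: (lt_INR 0).
have HMn : (INR M <= INR n) by apply: le_INR; apply/leP.
have Hinv : (/ INR n <= / INR M) by apply: Rinv_le_contravar.
have H12 : (12 / INR n < eps).
  rewrite /Rdiv. have : (12 * / INR M < eps).
    have := Rmult_lt_compat_l 12 _ _ ltac:(lra) HM. 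
    have -> : (12 * (eps / 12) = eps) by field.
    by [].
  lra.
rewrite /Rdist; apply: Rabs_def1; lra.
Qed.

End An.

Theorem mainTheorem9 (c alpha : R) :
  Rlt 0 c -> Rle 0 alpha /\ Rle alpha 1 ->
  (exists N : nat, forall n : nat, (N <= n)%N ->
      (1 <= tfun c alpha n)%N /\ (2 * tfun c alpha n <= n + 1)%N) ->
  (forall (n : nat) (V : finType) (sigma : V -> V -> int),
      (1 <= tfun c alpha n)%N -> (2 * tfun c alpha n <= n + 1)%N ->
      #|V| = n.+1 -> sigma_valid sigma ->
      is_t_matching (Medges sigma) (tfun c alpha n) ->
      (\sum_(a in Mcal sigma)
         Rplus (Rsqr (Rabs (beta_plus n (tfun c alpha n) sigma a)))
               (Rsqr (Rabs (beta_plus n (tfun c alpha n) sigma (arc_inv a)))))%R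
      = FP c alpha n)
  /\ Un_cv (FP c alpha) R1.
Proof.
move=> _ _ [N0 HN0]; split; last exact: (FP_cv HN0).
  move=> n V sigma _ H2 _ Hv [Hcard _].
  by rewrite (sum_term H2 Hv) // card_Mcal.
Qed.
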